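(* The variety $\mathbb{ML}^{\Box\Diamond}_{\mathrm{d}}$ is generated by its finite members; that is, an identity in the signature $\{\wedge,\vee,\neg,\Box,\Diamond,0,1\}$ holds in every algebra of $\mathbb{ML}^{\Box\Diamond}_{\mathrm{d}}$ if and only if it holds in every finite algebra of $\mathbb{ML}^{\Box\Diamond}_{\mathrm{d}}$.
   Context: A meet-complemented lattice is a lattice $(L,\le)$ such that for every $a\in L$ the element $\neg a=\max\{b\in L: a\wedge b\le c\ \text{for all } c\in L\}$ exists; it is bounded with bottom $0$ and top $1$. For $a\in L$, $\Box a=\max\{b\in L: a\vee\neg b=1\}$ and $\Diamond a=\min\{b\in L: \neg a\vee b=1\}$, when these exist. $\mathbb{ML}^{\Box\Diamond}_{\mathrm{d}}$ is the class of distributive meet-complemented lattices in which $\Box a$ and $\Diamond a$ exist for every $a$, considered as algebras $(L;\wedge,\vee,\neg,\Box,\Diamond,0,1)$. *)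

(* Defs.v *)
From HB Require Import structures.
From mathcomp Require Import all_boot all_order.
Set Implicit Arguments. Unset Strict Implicit. Unset Printing Implicit Defensive.
Import Order.TTheory.
Local Open Scope order_scope.

Definition is_max d (L : porderType d) (P : L -> Prop) (x : L) :=
  P x /\ forall y, P y -> y <= x.
Definition is_min d (L : porderType d) (P : L -> Prop) (x : L) :=
  P x /\ forall y, P y -> x <= y.

Definition MLbd d (L : tbDistrLatticeType d) (neg box dia : L -> L) : Prop :=
  [/\ (forall a : L, is_max (fun b => forall c : L, a `&` b <= c) (neg a)),
      (forall a : L, is_max (fun b => a `|` neg b = \top) (box a)) &
      (forall a : L, is_min (fun b => neg a `|` b = \top) (dia a))].

Inductive term : Type :=
  | tVar of nat
  | tMeet of term & term
  | tJoin of term & term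
  | tNeg of term
  | tBox of term
  | tDia of term
  | tZero
  | tOne.

Fixpoint eval d (L : tbDistrLatticeType d) (neg box dia : L -> L)
    (v : nat -> L) (t : term) : L :=
  match t with
  | tVar n => v n
  | tMeet t1 t2 => eval neg box dia v t1 `&` eval neg box dia v t2
  | tJoin t1 t2 => eval neg box dia v t1 `|` eval neg box dia v t2
  | tNeg t1 => neg (eval neg box dia v t1)
  | tBox t1 => box (eval neg box dia v t1)
  | tDia t1 => dia (eval neg box dia v t1)
  | tZero => \bot
  | tOne => \top
  end.

Definition holds d (L : tbDistrLatticeType d) (neg box dia : L -> L)
    (t1 t2 : term) : Prop :=
  forall v : nat -> L, eval neg box dia v t1 = eval neg box dia v t2.

(* Main.v *)
Require Import Defs.
From mathcomp Require Import all_boot all_order.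
From HB Require Import structures.
Set Implicit Arguments. Unset Strict Implicit. Unset Printing Implicit Defensive.
Import Order.TTheory.
Local Open Scope order_scope.


Section Gen.
Variables (d : Order.disp_t) (L : tbDistrLatticeType d) (n : nat) (gen : 'I_n -> L).

Lemma meetJ_le (I : finType) (P : pred I) (F : I -> L) (x : L) :
  x `&` \join_(i | P i) F i <= \join_(i | P i) (x `&` F i).
Proof.
elim/big_rec2: _ => [|i y1 y2 Pi IH]; first by rewrite meetx0.
by rewrite meetUr leU2.
Qed.

Definition mA (A : {set 'I_n}) : L := \meet_(i in A) gen i.
Definition cl (x : L) : L := \join_(A : {set 'I_n} | mA A <= x) mA A.
Lemma cl_le x : cl x <= x.
Proof. by apply/joinsP. Qed.

Definition S : {pred L} := fun x => x == cl x.

Lemma S_ge x : (x <= cl x) -> x \in S.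
Proof. by move=> h; rewrite unfold_in /S eq_le h cl_le. Qed.

Lemma clE x : x \in S -> cl x = x.
Proof. by rewrite unfold_in /S => /eqP <-. Qed.

Lemma S_meet : meet_closed S.
Proof.
move=> x y Sx Sy; apply: S_ge.
rewrite -{1}(clE Sx) -{1}(clE Sy).
rewrite meetC; apply: (le_trans (meetJ_le _ _ _)); apply/joinsP => A hA.
rewrite meetC; apply: (le_trans (meetJ_le _ _ _)); apply/joinsP => B hB.
apply: (joins_min (j := A :|: B)).
  by rewrite /mA meets_setU; apply: leI2.
by rewrite /mA meets_setU.
Qed.

Lemma S_join : join_closed S.
Proof.
move=> x y Sx Sy; apply: S_ge.
rewrite -{1}(clE Sx) -{1}(clE Sy).
rewrite leUx; apply/andP; split; apply/joinsP => A hA; apply: (joins_min (j := A)) => //;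
  apply: (le_trans hA); [exact: leUl | exact: leUr].
Qed.

Lemma S_bot : \bot \in S.
Proof. by apply: S_ge; rewrite le0x. Qed.

Lemma S_top : \top \in S.
Proof. by apply: S_ge; apply: (joins_min (j := set0)); rewrite /mA ?big_set0 ?lex1. Qed.

Lemma S_gen i : gen i \in S.
Proof. by apply: S_ge; apply: (joins_min (j := [set i])); rewrite /mA big_set1. Qed.

HB.instance Definition _ := Order.isTBLatticeClosed.Build d L S S_meet S_join S_bot S_top.

Definition M := {x : L | x \in S}.
HB.instance Definition _ := [isSub of M for @sval L (fun x => x \in S)].
HB.instance Definition _ := [Choice of M by <:].
HB.instance Definition _ := [SubChoice_isTBSubLattice of M by <: with d].

Lemma M_meetUl : @left_distributive M M Order.meet Order.join.
Proof. move=> x y z; apply: val_inj => /=. exact: meetUl. Qed.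
HB.instance Definition _ := Order.Lattice_Meet_isDistrLattice.Build d M M_meetUl.

Definition encM (x : M) : {set {set 'I_n}} := [set A | mA A <= val x].
Definition decM (X : {set {set 'I_n}}) : option M := insub (\join_(A in X) mA A).
Lemma encMK : pcancel encM decM.
Proof.
move=> x; rewrite /decM /encM.
rewrite (eq_bigl (fun A => mA A <= val x)); last by move=> A; rewrite inE.
by rewrite -/(cl (val x)) clE ?valK // (valP x).
Qed.
HB.instance Definition _ := PCanIsCountable encMK.
HB.instance Definition _ := isFinite.Build M (pcan_enumP encMK).

Lemma valM_meet (x y : M) : val (x `&` y) = val x `&` val y. Proof. by []. Qed.
Lemma valM_join (x y : M) : val (x `|` y) = val x `|` val y. Proof. by []. Qed.
Lemma valM_bot : val (\bot : M) = \bot. Proof. by []. Qed.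
Lemma valM_top : val (\top : M) = \top. Proof. by []. Qed.

End Gen.

Section Fin.
Variables (d : Order.disp_t) (F : finTBDistrLatticeType d).

Definition negF (a : F) : F := \join_(b : F | a `&` b == \bot) b.
Definition boxF (a : F) : F := \join_(b : F | a `|` negF b == \top) b.
Definition diaF (a : F) : F := \meet_(b : F | negF a `|` b == \top) b.

Lemma negF_bot a : a `&` negF a = \bot.
Proof.
apply/eqP; rewrite -lex0; apply: (le_trans (meetJ_le _ _ _)).
by apply/joinsP => b /eqP ->.
Qed.

Lemma negF_max a b : a `&` b = \bot -> b <= negF a.
Proof. by move=> h; apply: (joins_sup (j := b)); rewrite h. Qed.

Lemma MLbd_fin : MLbd negF boxF diaF.
Proof.
split.
- move=> a; split; first by move=> c; rewrite negF_bot le0x.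
  move=> y H; apply: negF_max; apply/eqP; rewrite -lex0; exact: H.
- move=> a; split; last by move=> y H; apply: (joins_sup (j := y)); rewrite H.
  rewrite /boxF; elim/big_ind: _.
  + have -> : negF \bot = \top.
      by apply/eqP; rewrite -le1x; apply: negF_max; rewrite meet0x.
    by rewrite joinx1.
  + move=> x y hx hy; apply/eqP.
    have le1 : negF x `&` negF y <= negF (x `|` y).
      apply: negF_max; apply/eqP; rewrite -lex0 meetUl leUx.
      rewrite meetA negF_bot meet0x lexx /=.
      by rewrite meetCA negF_bot meetx0 lexx.
    have E : a `|` (negF x `&` negF y) = \top by rewrite joinIr hx hy meetxx.
    by rewrite -le1x -E leU2.
  + by move=> i /eqP.
- move=> a; split; last by move=> y H; apply: (meets_inf (j := y)); rewrite H.
  rewrite /diaF; elim/big_ind: _.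
  + by rewrite joinx1.
  + by move=> x y hx hy; rewrite joinIr hx hy meetxx.
  + by move=> i /eqP.
Qed.
End Fin.

Section Props.
Variables (d : Order.disp_t) (L : tbDistrLatticeType d) (neg box dia : L -> L).
Hypothesis HL : MLbd neg box dia.

Lemma neg_bot a : a `&` neg a = \bot.
Proof. case: HL => Hn _ _; apply/eqP; rewrite -lex0; exact: (Hn a).1. Qed.
Lemma neg_max a b : a `&` b = \bot -> b <= neg a.
Proof. case: HL => Hn _ _ E; apply: (Hn a).2 => c; by rewrite E le0x. Qed.
Lemma box_top a : a `|` neg (box a) = \top.
Proof. by case: HL => _ Hb _; exact: (Hb a).1. Qed.
Lemma box_max a b : a `|` neg b = \top -> b <= box a.
Proof. by case: HL => _ Hb _; exact: (Hb a).2. Qed.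
Lemma dia_top a : neg a `|` dia a = \top.
Proof. by case: HL => _ _ Hd; exact: (Hd a).1. Qed.
Lemma dia_min a b : neg a `|` b = \top -> dia a <= b.
Proof. by case: HL => _ _ Hd; exact: (Hd a).2. Qed.
End Props.

Section Transfer.
Variables (d : Order.disp_t) (L : tbDistrLatticeType d) (neg box dia : L -> L).
Hypothesis HL : MLbd neg box dia.
Variables (d' : Order.disp_t) (M : tbDistrLatticeType d') (negM boxM diaM : M -> M).
Hypothesis HM : MLbd negM boxM diaM.
Variable h : M -> L.
Hypothesis h_inj : injective h.
Hypothesis hI : forall x y, h (x `&` y) = h x `&` h y.
Hypothesis hU : forall x y, h (x `|` y) = h x `|` h y.
Hypothesis h0 : h \bot = \bot.
Hypothesis h1 : h \top = \top.

Lemma hle x y : (x <= y) = (h x <= h y).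
Proof.
apply/idP/idP.
  by move/meet_idPl => E; rewrite -E hI leIr.
by move/meet_idPl => E; apply/meet_idPl; apply: h_inj; rewrite hI.
Qed.

Lemma hbot x : (x = \bot) <-> (h x = \bot).
Proof. by split => [->//|E]; apply: h_inj; rewrite E h0. Qed.
Lemma htop x : (x = \top) <-> (h x = \top).
Proof. by split => [->//|E]; apply: h_inj; rewrite E h1. Qed.

Lemma hnegle x : h (negM x) <= neg (h x).
Proof. by apply: (neg_max HL); rewrite -hI (neg_bot HM) h0. Qed.

Lemma neg_tr x y : h y = neg (h x) -> h (negM x) = neg (h x).
Proof.
move=> Ey; apply/le_anti; rewrite hnegle /= -Ey -hle.
by apply: (neg_max HM); apply/hbot; rewrite hI Ey (neg_bot HL).
Qed.

Lemma box_tr x y z : h y = box (h x) -> h z = neg (box (h x)) ->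
  h (boxM x) = box (h x).
Proof.
move=> Ey Ez.
have Ny : h (negM y) = neg (h y) by apply: (neg_tr (y := z)); rewrite Ez Ey.
apply/le_anti; apply/andP; split.
  apply: (box_max HL); apply/eqP; rewrite eq_le lex1 /=.
  rewrite -h1 -(box_top HM x) hU; apply: leU2 => //; exact: hnegle.
rewrite -Ey -hle; apply: (box_max HM); apply/htop.
by rewrite hU Ny Ey (box_top HL).
Qed.

Lemma dia_tr x y z : h y = neg (h x) -> h z = dia (h x) ->
  h (diaM x) = dia (h x).
Proof.
move=> Ey Ez.
have Nx : h (negM x) = neg (h x) by exact: (neg_tr Ey).
apply/le_anti; apply/andP; split.
  rewrite -Ez -hle; apply: (dia_min HM); apply/htop.
  by rewrite hU Nx Ez (dia_top HL).
apply: (dia_min HL); by rewrite -Nx -hU (dia_top HM) h1.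
Qed.

Variables (v : nat -> L) (vM : nat -> M) (P : L -> Prop).
Hypothesis hv : forall k, P (v k) -> h (vM k) = v k.
Hypothesis himg : forall x, P x -> exists y, h y = x.

Fixpoint okt (t : term) : Prop :=
  [/\ P (eval neg box dia v t), P (neg (eval neg box dia v t)) &
  match t with
  | tMeet a b | tJoin a b => okt a /\ okt b
  | tNeg a | tBox a | tDia a => okt a
  | _ => True
  end].

Lemma okt_n t : okt t -> P (neg (eval neg box dia v t)).
Proof. by case: t => [?|??|??|?|?|?||] [] . Qed.

Fixpoint gl (t : term) : seq L :=
  [:: eval neg box dia v t, neg (eval neg box dia v t) &
  match t with
  | tMeet a b | tJoin a b => gl a ++ gl b
  | tNeg a | tBox a | tDia a => gl a
  | _ => [::]
  end].

Lemma okt_gl t : (forall x, x \in gl t -> P x) -> okt t.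
Proof.
elim: t => [k|a IHa b IHb|a IHa b IHb|a IHa|a IHa|a IHa||] /= H;
  (split; [apply: H; rewrite !inE eqxx // | apply: H; rewrite !inE eqxx ?orbT // |]) => //;
  try split; try (apply: IHa => x hx; apply: H; rewrite !inE ?mem_cat hx ?orbT //);
  try (apply: IHb => x hx; apply: H; rewrite !inE ?mem_cat hx ?orbT //).
Qed.

Lemma eval_tr t : okt t -> h (eval negM boxM diaM vM t) = eval neg box dia v t.
Proof.
elim: t => [k|a IHa b IHb|a IHa b IHb|a IHa|a IHa|a IHa||] /=.
- by case=> ? _ _; exact: hv.
- by case=> _ _ [/IHa ? /IHb ?]; rewrite hI; congr (_ `&` _).
- by case=> _ _ [/IHa ? /IHb ?]; rewrite hU; congr (_ `|` _).
- case=> Pn _ oa; have [y Ey] := himg Pn.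
  by rewrite -(IHa oa) in Ey *; exact: (neg_tr Ey).
- case=> Pb Pnb oa; have [y Ey] := himg Pb; have [z Ez] := himg Pnb.
  by rewrite -(IHa oa) in Ey Ez *; exact: (box_tr Ey Ez).
- case=> Pd _ oa; have Pna := okt_n oa.
  have [y Ey] := himg Pna; have [z Ez] := himg Pd.
  by rewrite -(IHa oa) in Ey Ez *; exact: (dia_tr Ey Ez).
- by move=> _; exact: h0.
- by move=> _; exact: h1.
Qed.
End Transfer.

Theorem corollary4 (t1 t2 : term) :
  (forall (d : Order.disp_t) (L : tbDistrLatticeType d) (neg box dia : L -> L),
      MLbd neg box dia -> holds neg box dia t1 t2)
  <->
  (forall (d : Order.disp_t) (L : finTBDistrLatticeType d) (neg box dia : L -> L),
      MLbd neg box dia -> holds neg box dia t1 t2).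
Proof.
split; first by move=> H d L neg box dia HL; exact: H.
move=> H d L neg box dia HL v.
pose g := gl neg box dia v t1 ++ gl neg box dia v t2.
pose gen := fun i : 'I_(size g).+1 => nth \bot g i.
pose vM := fun k => insubd (\bot : M gen) (v k).
have Hg x : x \in g -> x \in S gen.
  move=> xg; have -> : x = gen (inord (index x g)).
    by rewrite /gen inordK ?nth_index // ltnS index_size.
  exact: S_gen.
have HF := H _ (M gen) _ _ _ (MLbd_fin (M gen)) vM.
have hinj : injective (val : M gen -> L) by exact: val_inj.
have hv k : v k \in S gen -> val (vM k) = v k by move=> hk; rewrite /vM insubdK.
have himg x : x \in S gen -> exists y : M gen, val y = x.
  by move=> hx; exists (Sub x hx); rewrite SubK.
have E1 := @eval_tr d L neg box dia HL d (M gen) _ _ _ (MLbd_fin (M gen)) val hinj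
  (@valM_meet _ _ _ gen) (@valM_join _ _ _ gen) (@valM_bot _ _ _ gen) (@valM_top _ _ _ gen)
  v vM (fun x => x \in S gen) hv himg.
rewrite -E1; last by apply: okt_gl => x hx; apply: Hg; rewrite mem_cat hx.
rewrite -E1; last by apply: okt_gl => x hx; apply: Hg; rewrite mem_cat hx orbT.
by rewrite HF.
Qed.
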